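(* For all $c\in\mathbb{C}$ with $c\neq-\frac{22}{5}$ and all even integers $n\ge16$, either $F(n-4,c)\neq0$ or $G(n-6,c)\neq0$. Equivalently, the variety $V\subset\mathbb{C}^2$ defined by $F(n-4,c)=0$ and $G(n-6,c)=0$ has no points $(c,n)$ with $c\ne -\frac{22}{5}$ and $n\ge16$ an even integer.
   Context: Define the rational functions $$F(n,c)=-\frac{(10+n)\big(p_0(c)+p_1(c)n+p_2(c)n^2+p_3(c)n^3\big)}{36(22+5c)(1+n)(3+n)(4+n)},$$ with $p_0(c)=720+384c+12c^2$, $p_1(c)=-5286+125c+19c^2$, $p_2(c)=-2160+40c+8c^2$, $p_3(c)=-186+11c+c^2$, and $$G(n,c)=-\frac{(12+n)\big(q_0(c)+q_1(c)n+q_2(c)n^2+q_3(c)n^3+q_4(c)n^4\big)}{1260(22+5c)(1+n)(3+n)(4+n)(5+n)},$$ with $q_0(c)=-466200+20580c+2100c^2$, $q_1(c)=-183780-46096c+3745c^2$, $q_2(c)=-74076-31732c+2065c^2$, $q_3(c)=-19116-5624c+455c^2$, $q_4(c)=-1308-248c+35c^2$. *)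

(* Defs.v *)
From HB Require Import structures.
From mathcomp Require Import all_boot all_order all_algebra.
From mathcomp Require Import complex.
From mathcomp Require Import reals.
Set Implicit Arguments. Unset Strict Implicit. Unset Printing Implicit Defensive.
Import Order.TTheory GRing.Theory Num.Theory.
Local Open Scope ring_scope.

Section FG.
Variable K : fieldType.

Definition p0 (c : K) : K := 720 + 384 * c + 12 * c ^+ 2.
Definition p1 (c : K) : K := - 5286 + 125 * c + 19 * c ^+ 2.
Definition p2 (c : K) : K := - 2160 + 40 * c + 8 * c ^+ 2.
Definition p3 (c : K) : K := - 186 + 11 * c + c ^+ 2.

Definition Ffun (n c : K) : K :=
  - ((10 + n) * (p0 c + p1 c * n + p2 c * n ^+ 2 + p3 c * n ^+ 3))
    / (36 * (22 + 5 * c) * (1 + n) * (3 + n) * (4 + n)).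

Definition q0 (c : K) : K := - (466 * 1000 + 200) + (20 * 1000 + 580) * c + 2100 * c ^+ 2.
Definition q1 (c : K) : K := - (183 * 1000 + 780) - (46 * 1000 + 96) * c + 3745 * c ^+ 2.
Definition q2 (c : K) : K := - (74 * 1000 + 76) - (31 * 1000 + 732) * c + 2065 * c ^+ 2.
Definition q3 (c : K) : K := - (19 * 1000 + 116) - 5624 * c + 455 * c ^+ 2.
Definition q4 (c : K) : K := - 1308 - 248 * c + 35 * c ^+ 2.

Definition Gfun (n c : K) : K :=
  - ((12 + n) * (q0 c + q1 c * n + q2 c * n ^+ 2 + q3 c * n ^+ 3 + q4 c * n ^+ 4))
    / (1260 * (22 + 5 * c) * (1 + n) * (3 + n) * (4 + n) * (5 + n)).
End FG.

(* Main.v *)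
Require Import Defs.
From HB Require Import structures.
From mathcomp Require Import all_boot all_order all_algebra.
From mathcomp Require Import complex.
From mathcomp Require Import reals.
From mathcomp Require Import ring.
Import Order.TTheory GRing.Theory Num.Theory.
Local Open Scope ring_scope.
Set Implicit Arguments.
Unset Strict Implicit.

Section Alg.
Variable K : fieldType.
Implicit Types (c m y : K).

Definition Pp m c := p0 c + p1 c * m + p2 c * m ^+ 2 + p3 c * m ^+ 3.
Definition Qp m c := q0 c + q1 c * m + q2 c * m ^+ 2 + q3 c * m ^+ 3 + q4 c * m ^+ 4.

Definition pa m : K := 12 + 19 * m + 8 * m ^+ 2 + m ^+ 3.
Definition pb m : K := 384 + 125 * m + 40 * m ^+ 2 + 11 * m ^+ 3.
Definition pe m : K := 720 - (5 * 1000 + 286) * m - 2160 * m ^+ 2 - 186 * m ^+ 3.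
Definition qa m : K := 2100 + 3745 * m + 2065 * m ^+ 2 + 455 * m ^+ 3 + 35 * m ^+ 4.
Definition qb m : K := (20 * 1000 + 580) - (46 * 1000 + 96) * m - (31 * 1000 + 732) * m ^+ 2
   - (5 * 1000 + 624) * m ^+ 3 - 248 * m ^+ 4.
Definition qe m : K := - (466 * 1000 + 200) - (183 * 1000 + 780) * m - (74 * 1000 + 76) * m ^+ 2
   - (19 * 1000 + 116) * m ^+ 3 - 1308 * m ^+ 4.

Lemma PpE m c : Pp m c = pa m * c ^+ 2 + pb m * c + pe m.
Proof. rewrite /Pp /p0 /p1 /p2 /p3 /pa /pb /pe; ring. Qed.
Lemma QpE m c : Qp m c = qa m * c ^+ 2 + qb m * c + qe m.
Proof. rewrite /Qp /q0 /q1 /q2 /q3 /q4 /qa /qb /qe; ring. Qed.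

Definition Res y : K :=
  let a := pa (y + 2) in let b := pb (y + 2) in let e := pe (y + 2) in
  let a' := qa y in let b' := qb y in let e' := qe y in
  (a * e' - a' * e) ^+ 2 - (a * b' - a' * b) * (b * e' - b' * e).

Lemma Res0 c y : Pp (y + 2) c = 0 -> Qp y c = 0 -> Res y = 0.
Proof.
rewrite PpE QpE /Res.
set a := pa _; set b := pb _; set e := pe _; set a' := qa _; set b' := qb _; set e' := qe _.
move=> hP hQ.
have h1 : (a * b' - a' * b) * c = - (a * e' - a' * e).
  have -> : (a * b' - a' * b) * c = - (a' * (a * c ^+ 2 + b * c + e) - a * (a' * c ^+ 2 + b' * c + e')) - (a * e' - a' * e) by ring.
  by rewrite hP hQ; ring.
have h2 : c * ((a * e' - a' * e) * c + (b * e' - b' * e)) = 0.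
  have -> : c * ((a * e' - a' * e) * c + (b * e' - b' * e)) = e' * (a * c ^+ 2 + b * c + e) - e * (a' * c ^+ 2 + b' * c + e') by ring.
  by rewrite hP hQ; ring.
have [c0|cn0] := eqVneq c 0.
  move: hP hQ; rewrite c0; rewrite !expr0n /= !mulr0 !add0r => -> ->; rewrite !(mulr0, subrr) expr0n /= ?mul0r ?mulr0 ?subrr //.
move/eqP: h2; rewrite mulf_eq0 (negPf cn0) /= => /eqP h2.
have -> : b * e' - b' * e = - ((a * e' - a' * e) * c) by apply/eqP; rewrite -addr_eq0 addrC h2.
have -> : (a * e' - a' * e) ^+ 2 - (a * b' - a' * b) * - ((a * e' - a' * e) * c)
   = (a * e' - a' * e) * ((a * e' - a' * e) + (a * b' - a' * b) * c) by ring.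
by rewrite h1 subrr mulr0.
Qed.

Definition Tp y : K := ((21 * 1000 + 655) * 1000 + 722) + ((45 * 1000 + 971) * 1000 + 131) * y + ((32 * 1000 + 152) * 1000 + 909) * y ^+ 2
  + ((10 * 1000 + 543) * 1000 + 770) * y ^+ 3 + (1774 * 1000 + 328) * y ^+ 4 + (148 * 1000 + 139) * y ^+ 5
  + 4881 * y ^+ 6.

Lemma ResE y : Res y = - 2304 * (y + 10) * (y + 9) * (y + 8) * (y + 5) ^+ 2 * (y + 3) * y ^+ 2 * Tp y.
Proof. rewrite /Res /pa /pb /pe /qa /qb /qe /Tp; ring. Qed.

End Alg.

Lemma Ffun_eq0 (K : fieldType) (m c : K) : Ffun m c = 0 ->
  36 * (22 + 5 * c) * (1 + m) * (3 + m) * (4 + m) != 0 -> 10 + m != 0 -> Pp m c = 0.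
Proof.
move=> hF hD h10; move/eqP: hF.
rewrite /Ffun mulf_eq0 oppr_eq0 invr_eq0 mulf_eq0 (negPf hD) (negPf h10) orbF /=.
by move/eqP.
Qed.

Lemma Gfun_eq0 (K : fieldType) (m c : K) : Gfun m c = 0 ->
  1260 * (22 + 5 * c) * (1 + m) * (3 + m) * (4 + m) * (5 + m) != 0 -> 12 + m != 0 -> Qp m c = 0.
Proof.
move=> hF hD h10; move/eqP: hF.
rewrite /Gfun mulf_eq0 oppr_eq0 invr_eq0 mulf_eq0 (negPf hD) (negPf h10) orbF /=.
by move/eqP.
Qed.

Definition Tn (s : nat) : nat := (((21 * 1000 + 655) * 1000 + 722) + ((45 * 1000 + 971) * 1000 + 131) * s + ((32 * 1000 + 152) * 1000 + 909) * s ^ 2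
  + ((10 * 1000 + 543) * 1000 + 770) * s ^ 3 + (1774 * 1000 + 328) * s ^ 4 + (148 * 1000 + 139) * s ^ 5
  + 4881 * s ^ 6)%N.

Lemma Tn_gt0 s : (0 < Tn s)%N.
Proof. rewrite /Tn. do 7 apply: ltn_addr. by rewrite muln_gt0. Qed.

Lemma TpE (K : fieldType) (s : nat) : Tp (s%:R : K) = (Tn s)%:R.
Proof. rewrite /Tn /Tp; ring. Qed.

Local Open Scope complex_scope.

Theorem theorem6p5 (R : realType) (c : R[i]) (n : nat) :
  c != - (22%:R / 5%:R) -> ~~ odd n -> (16 <= n)%N ->
  Ffun (n%:R - 4%:R) c != 0 \/ Gfun (n%:R - 6%:R) c != 0.
Proof.
move=> hc _ hn.
have ns : n = ((n - 6) + 6)%N by rewrite subnK // (leq_trans _ hn).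
set s := (n - 6)%N in ns.
have s0 : s != 0%N by rewrite /s subn_eq0 -ltnNge (leq_trans _ hn).
set y : R[i] := s%:R.
have e1 : n%:R - 4%:R = y + 2 :> R[i] by rewrite ns natrD /y; ring.
have e2 : n%:R - 6%:R = y :> R[i] by rewrite ns natrD /y; ring.
have nz : forall k : nat, y + k.+1%:R != 0.
  by move=> k; rewrite /y -natrD pnatr_eq0 addnS.
have nzl : forall k : nat, k.+1%:R + y != 0.
  by move=> k; rewrite addrC nz.
have nz2 : forall k : nat, k.+1%:R + (y + 2) != 0.
  by move=> k; rewrite (addrC y) addrA -natrD addSn nzl.
have y0 : y != 0 by rewrite /y pnatr_eq0.
have c5 : 22 + 5 * c != 0.
  apply/eqP => h; move/eqP: hc; apply.
  have e : c = (22 + 5 * c) / 5 - 22 / 5 by field.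
  by rewrite e h mul0r sub0r.
rewrite e1 e2.
case: (eqVneq (Ffun (y + 2) c) 0) => hF; last by left.
right; apply/eqP => hG.
have hP : Pp (y + 2) c = 0.
  apply: Ffun_eq0 hF _ _; last by rewrite nz2.
  rewrite !mulf_neq0 ?pnatr_eq0 ?nz2 ?c5 //; exact: (nz2 0).
have hQ : Qp y c = 0.
  apply: Gfun_eq0 hG _ _; last by rewrite nzl.
  rewrite !mulf_neq0 ?pnatr_eq0 ?nzl ?c5 //; exact: (nzl 0).
have := Res0 hP hQ.
rewrite ResE /y TpE -/y.
have hT : (Tn s)%:R != 0 :> R[i] by rewrite pnatr_eq0 -lt0n; exact: Tn_gt0.
move: (Tn s) hT => T hT.
apply/eqP.
rewrite !mulf_neq0 ?expf_neq0 ?nz ?oppr_eq0 ?hT //.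
by rewrite pnatr_eq0.
Qed.
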